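(* Let $G_{\|v_0}$ be a well-initialized prefix-independent game with steady negotiation, let $\epsilon\ge0$, and let $\lambda$ be an $\epsilon$-fixed point of the negotiation function. Then for every $\lambda$-consistent play $\xi$ starting in $v_0$, there exists an $\epsilon$-SPE $\bar\sigma$ in $G_{\|v_0}$ such that $\langle\bar\sigma\rangle_{v_0}=\xi$.
   Context: A game is a tuple $G=(\Pi,V,(V_i)_{i\in\Pi},E,\mu)$ where $\Pi$ is a finite set of players, $(V,E)$ is a finite directed graph in which every vertex has at least one outgoing edge, $(V_i)_{i\in\Pi}$ is a partition of $V$, and $\mu:V^\omega\to\mathbb{R}^\Pi$ is the outcome function. Plays, histories, strategies, profiles, compatibility and $\langle\bar\sigma\rangle_v$ are as usual; $G_{\|v_0}$ is $G$ initialized at $v_0$ and is well-initialized if every vertex is reachable from $v_0$; $-i$ denotes $\Pi\setminus\{i\}$; $\bar\sigma_{\|hv}$ is the profile in $G_{\|v}$ with $\sigma_{j\|hv}(h')=\sigma_j(hh')$. $G$ is prefix-independent if $\mu(h\rho)=\mu(\rho)$ for every history $h$ and play $\rho$. A profile $\bar\sigma$ in $G_{\|v_0}$ is an $\epsilon$-SPE if for every history $hv$ of $G_{\|v_0}$, every player $i$ and strategy $\sigma'_i$, $\mu_i(h\langle\bar\sigma_{-i\|hv},\sigma'_{i\|hv}\rangle_v)\le\mu_i(h\langle\bar\sigma_{\|hv}\rangle_v)+\epsilon$. A requirement is a map $\lambda:V\to\mathbb{R}\cup\{\pm\infty\}$. A play $\rho$ is $\lambda$-consistent if for every $i\in\Pi$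 and $n$ with $\rho_n\in V_i$, $\mu_i(\rho_n\rho_{n+1}\cdots)\ge\lambda(\rho_n)$. $\lambda\mathrm{Rat}_i(v)$ is the set of profiles $\bar\sigma_{-i}$ in $G_{\|v}$ for which there exists $\sigma_i$ such that for every history $hw$ from $v$ compatible with $\bar\sigma_{-i}$, $\langle\bar\sigma_{\|hw}\rangle_w$ is $\lambda$-consistent. For $i\in\Pi$, $v\in V_i$: $\mathrm{nego}(\lambda)(v)=\inf_{\bar\sigma_{-i}\in\lambda\mathrm{Rat}_i(v)}\sup_{\sigma_i}\mu_i(\langle\bar\sigma_{-i},\sigma_i\rangle_v)$, $\inf\emptyset=+\infty$. $\lambda$ is an $\epsilon$-fixed point of $\mathrm{nego}$ if $\lambda(v)-\epsilon\le\mathrm{nego}(\lambda)(v)\le\lambda(v)+\epsilon$ for all $v$ (with $\pm\infty\pm\epsilon=\pm\infty$). $G$ is with steady negotiation if for every player $i$, vertex $v$ and requirement $\lambda$, the set $\{\sup_{\sigma_i}\mu_i(\langle\bar\sigma_{-i},\sigma_i\rangle_v)\mid\bar\sigma_{-i}\in\lambda\mathrm{Rat}_i(v)\}$ is empty or has a minimum. *)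

(* Defs.v *)
From HB Require Import structures.
From mathcomp Require Import all_boot all_order all_algebra.
From mathcomp Require Import classical_sets boolp reals constructive_ereal ereal.
Set Implicit Arguments. Unset Strict Implicit. Unset Printing Implicit Defensive.
Import Order.TTheory GRing.Theory Num.Theory.
Local Open Scope classical_set_scope.
Local Open Scope ring_scope.

Section Game.
(* A game: players Pi (finite), vertices V (finite), owner v = the player i
   with v in V_i (the partition), edge relation E, outcome function mu. *)
Variables (R : realType) (Pi V : finType) (owner : V -> Pi) (E : rel V)
  (mu : (nat -> V) -> Pi -> R).

Definition strategy := seq V -> V.
Definition profile := Pi -> strategy.

Definition valid_strat (i : Pi) (s : strategy) : Prop :=
  forall (h : seq V) (v : V), owner v = i -> E v (s (rcons h v)).

Definition valid_profile (sg : profile) : Prop :=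
  forall i, valid_strat i (sg i).

Definition is_play (rho : nat -> V) : Prop := forall n, E (rho n) (rho n.+1).

Definition is_hist (v0 : V) (s : seq V) : Prop :=
  exists t, s = v0 :: t /\ path E v0 t.

Fixpoint out_prefix (sg : profile) (v : V) (n : nat) : seq V :=
  match n with
  | 0 => [:: v]
  | n.+1 => let p := out_prefix sg v n in
            rcons p (sg (owner (last v p)) p)
  end.

Definition outcome (sg : profile) (v : V) : nat -> V :=
  fun n => nth v (out_prefix sg v n) n.

Definition cat_play (h : seq V) (rho : nat -> V) : nat -> V :=
  fun n => if (n < size h)%N then nth (rho 0%N) h n else rho (n - size h)%N.

Definition suffix (rho : nat -> V) (n : nat) : nat -> V :=
  fun k => rho (n + k)%N.

Definition shift (sg : profile) (h : seq V) : profile :=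
  fun j h' => sg j (h ++ h').

Definition upd (sg : profile) (i : Pi) (t : strategy) : profile :=
  fun j => if j == i then t else sg j.

Definition prefix_independent : Prop :=
  forall (h : seq V) (rho : nat -> V), mu (cat_play h rho) = mu rho.

Definition well_initialized (v0 : V) : Prop :=
  forall v, exists h, is_hist v0 (rcons h v).

Definition eps_SPE (eps : R) (v0 : V) (sg : profile) : Prop :=
  forall (h : seq V) (v : V), is_hist v0 (rcons h v) ->
  forall (i : Pi) (s' : strategy), valid_strat i s' ->
    mu (cat_play h (outcome (upd (shift sg h) i (fun h' => s' (h ++ h'))) v)) i
    <= mu (cat_play h (outcome (shift sg h) v)) i + eps.

Definition requirement := V -> \bar R.

Definition lam_consistent (lam : requirement) (rho : nat -> V) : Prop :=
  forall n, (lam (rho n) <= (mu (suffix rho n) (owner (rho n)))%:E)%E.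

Definition compat_minus (i : Pi) (sg : profile) (d : V) (s : seq V) : Prop :=
  forall n, (n.+1 < size s)%N -> owner (nth d s n) != i ->
    nth d s n.+1 = sg (owner (nth d s n)) (take n.+1 s).

(* lambda Rat_i(v): profiles sg_{-i} (the i-th component of sg is ignored) *)
Definition lamRat (lam : requirement) (i : Pi) (v : V) : set profile :=
  [set sg | (forall j, j != i -> valid_strat j (sg j)) /\
     exists si, valid_strat i si /\
       forall (h : seq V) (w : V), is_hist v (rcons h w) ->
         compat_minus i sg v (rcons h w) ->
         lam_consistent lam (outcome (shift (upd sg i si) h) w)].

Definition best_resp_val (i : Pi) (v : V) (sg : profile) : \bar R :=
  ereal_sup [set (mu (outcome (upd sg i t) v) i)%:E | t in [set t | valid_strat i t]].

Definition nego (lam : requirement) (v : V) : \bar R :=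
  ereal_inf [set best_resp_val (owner v) v sg | sg in lamRat lam (owner v) v].

Definition eps_fixed_point (eps : R) (lam : requirement) : Prop :=
  forall v, (lam v - eps%:E <= nego lam v)%E /\ (nego lam v <= lam v + eps%:E)%E.

Definition steady_negotiation : Prop :=
  forall (i : Pi) (v : V) (lam : requirement),
    let S := [set best_resp_val i v sg | sg in lamRat lam i v] in
    S = set0 \/ exists2 x, S x & forall y, S y -> (x <= y)%E.

End Game.

(* Main.v *)
Require Import Defs.
From HB Require Import structures.
From mathcomp Require Import all_boot all_order all_algebra.
From mathcomp Require Import classical_sets boolp reals constructive_ereal ereal.
Import Order.TTheory GRing.Theory Num.Theory.
Set Implicit Arguments. Unset Strict Implicit. Unset Printing Implicit Defensive.

Definition pre (T : Type) (rho : nat -> T) (n : nat) : seq T := mkseq rho n.+1.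

Lemma pre_last (T : Type) (x : T) rho n : last x (pre rho n) = rho n.
Proof. by rewrite /pre mkseqS last_rcons. Qed.

Lemma pre_nth (T : Type) (x : T) rho n k : k <= n -> nth x (pre rho n) k = rho k.
Proof. by move=> hk; rewrite /pre nth_mkseq. Qed.

Lemma pre_size (T : Type) (rho : nat -> T) n : size (pre rho n) = n.+1.
Proof. by rewrite /pre size_mkseq. Qed.

Lemma preS (T : Type) (rho : nat -> T) n : pre rho n.+1 = rcons (pre rho n) (rho n.+1).
Proof. by rewrite /pre mkseqS. Qed.

Section Gen.
Variables (Pi V : finType) (owner : V -> Pi).

Lemma out_prefix_pre (sg : profile Pi V) v n :
  out_prefix owner sg v n = pre (outcome owner sg v) n.
Proof.
elim: n => [|n IH] //=.
rewrite preS -IH; congr rcons.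
rewrite /outcome /= nth_rcons IH pre_size ltnn eqxx.
by [].
Qed.

Lemma out_step (sg : profile Pi V) v n :
  outcome owner sg v n.+1 =
  sg (owner (outcome owner sg v n)) (pre (outcome owner sg v) n).
Proof.
rewrite {1}/outcome /= out_prefix_pre nth_rcons pre_size ltnn eqxx.
by rewrite pre_last.
Qed.

Lemma out_char (sg : profile Pi V) v (rho : nat -> V) :
  rho 0 = v -> (forall n, rho n.+1 = sg (owner (rho n)) (pre rho n)) ->
  forall n, outcome owner sg v n = rho n.
Proof.
move=> h0 hS.
have H : forall n, out_prefix owner sg v n = pre rho n.
  elim=> [|n IH] /=; first by rewrite /pre /mkseq /= h0.
  by rewrite IH preS pre_last hS.
by move=> n; rewrite /outcome H pre_nth.
Qed.

Lemma out0 (sg : profile Pi V) v : outcome owner sg v 0 = v.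
Proof. by []. Qed.

End Gen.

Section Main.
Variables (R : realType) (Pi V : finType) (owner : V -> Pi)
  (E : rel V) (mu : (nat -> V) -> Pi -> R) (v0 : V).
Hypothesis Hpi : prefix_independent mu.
Variables (eps : R) (lam : requirement R V).
Hypothesis Hfix : eps_fixed_point owner E mu eps lam.
Variable xi : nat -> V.
Hypotheses (Hxi0 : xi 0 = v0) (Hxip : is_play E xi)
  (Hxic : lam_consistent owner mu lam xi).
Variable def : V -> V.
Hypothesis Hdef : forall v, E v (def v).
Variable pun : V -> profile Pi V * strategy V.

Definition tau (u : V) : profile Pi V := upd (pun u).1 (owner u) (pun u).2.
Definition negov := nego owner E mu lam.

Definition PunSpec (u : V) : Prop :=
  [/\ (forall j, j != owner u -> valid_strat owner E j ((pun u).1 j)),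
      valid_strat owner E (owner u) (pun u).2,
      (forall h w, is_hist E u (rcons h w) ->
         compat_minus owner (owner u) (pun u).1 u (rcons h w) ->
         lam_consistent owner mu lam (outcome owner (shift (tau u) h) w))
    & best_resp_val owner E mu (owner u) u (pun u).1 = negov u].

Hypothesis Hpun : forall u, (lam u < +oo)%E -> PunSpec u.

Definition mode := option (V * nat).

Definition move (m : mode) (F : seq V) : V :=
  match m with
  | None => xi (size F)
  | Some (u, p) => tau u (owner (last v0 F)) (drop p F)
  end.

Definition trans (m : mode) (F : seq V) (w : V) : mode :=
  if w == move m F then m else
  let x := last v0 F in
  match m with
  | Some (u, p) => if (owner u == owner x) && ~~ (negov x < negov u)%E then m
                   else Some (x, (size F).-1)
  | None => Some (x, (size F).-1)
  end.

Fixpoint st_rev (r : seq V) : mode :=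
  match r with
  | w :: ((_ :: _) as r') => trans (st_rev r') (rev r') w
  | _ => None
  end.

Definition st (F : seq V) : mode := st_rev (rev F).

Lemma st_rcons F w : F <> [::] -> st (rcons F w) = trans (st F) F w.
Proof.
move=> hF; rewrite /st rev_rcons /=.
case E1: (rev F) => [|a r]; first by move: E1 => /(congr1 rev); rewrite revK.
by rewrite -E1 revK.
Qed.

Lemma st1 x : st [:: x] = None.
Proof. by []. Qed.

Definition sg : profile Pi V := fun _ F =>
  let w := move (st F) F in if E (last v0 F) w then w else def (last v0 F).

Definition Inv (F : seq V) : Prop :=
  is_hist E v0 F /\
  match st F with
  | None => F = pre xi (size F).-1
  | Some (u, p) => [/\ (lam u < +oo)%E, is_hist E u (drop p F)
                     & compat_minus owner (owner u) (pun u).1 u (drop p F)]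
  end.

Lemma tau_valid u : (lam u < +oo)%E -> valid_profile owner E (tau u).
Proof.
move=> /Hpun [h1 h2 _ _] j; rewrite /tau /upd.
by case: eqP => [->//|/eqP]; apply: h1.
Qed.

Lemma valid_last i s G : G <> [::] -> valid_strat owner E i s ->
  owner (last v0 G) = i -> E (last v0 G) (s G).
Proof.
case: G => [//|x G] _ hv; rewrite (lastI x G) last_rcons => ho.
exact: hv.
Qed.

Lemma hist_ne u F : is_hist E u F -> F <> [::].
Proof. by move=> [t [-> _]]. Qed.

Lemma hist_rcons u F w : is_hist E u F -> E (last v0 F) w -> is_hist E u (rcons F w).
Proof.
case=> t [-> hp] he; exists (rcons t w); split => //.
by rewrite rcons_path hp.
Qed.

Lemma drop_last p (F : seq V) : drop p F <> [::] -> last v0 (drop p F) = last v0 F.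
Proof.
move=> hd; rewrite -{2}(cat_take_drop p F) last_cat.
by case: (drop p F) hd.
Qed.

Lemma drop_ne p (F : seq V) : drop p F <> [::] -> p < size F.
Proof.
by move=> hd; rewrite ltnNge; apply/negP => /drop_oversize hh; apply: hd.
Qed.

Lemma EdgeMove F : Inv F -> E (last v0 F) (move (st F) F).
Proof.
case=> hh; case: (st F) => [[u p]|] /=.
  case=> hl hu _.
  have hd := hist_ne hu.
  rewrite -(drop_last hd); apply: valid_last => //; first exact: tau_valid.
- move=> ->; rewrite pre_last pre_size; exact: Hxip.
Qed.

Lemma compat_rcons k (s : profile Pi V) d (S : seq V) w :
  compat_minus owner k s d S -> S <> [::] ->
  (owner (last d S) != k -> w = s (owner (last d S)) S) ->
  compat_minus owner k s d (rcons S w).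
Proof.
move=> hc hS hw n; rewrite size_rcons ltnS => hn.
have tk : take n.+1 (rcons S w) = take n.+1 S by rewrite -cats1 takel_cat.
case: (ltnP n.+1 (size S)) => h2.
  rewrite !nth_rcons (ltnW h2) h2 tk => ho; exact: hc.
have e : n.+1 = size S by apply/eqP; rewrite eqn_leq hn h2.
rewrite !nth_rcons -e ltnSn ltnn eqxx => ho.
have el : nth d S n = last d S by rewrite -nth_last -e.
rewrite el in ho *; rewrite (hw ho) e.
by rewrite -cats1 take_size_cat.
Qed.

Lemma last_ne (a b : V) S : S <> [::] -> last a S = last b S.
Proof. by case: S. Qed.

Lemma Inv_follow F : Inv F ->
  Inv (rcons F (move (st F) F)) /\ st (rcons F (move (st F) F)) = st F.
Proof.
move=> hI; have he := EdgeMove hI.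
case: (hI) => hh hm; have hne := hist_ne hh.
have est : st (rcons F (move (st F) F)) = st F by rewrite st_rcons // /trans eqxx.
split=> //; split; first exact: hist_rcons.
rewrite est; move: hm he; case Em: (st F) => [[u p]|] /=.
  case=> hl hu hc he.
  have hd := hist_ne hu; have hp := drop_ne hd.
  rewrite drop_rcons ?(ltnW hp) //; split => //.
    by apply: (hist_rcons hu); rewrite drop_last.
  apply: (compat_rcons hc hd) => ho.
  rewrite (last_ne u v0 hd) drop_last // in ho *.
  by rewrite /tau /upd (negbTE ho).
move=> eF _; rewrite size_rcons /=.
move: eF; set k := (size F).-1 => eF.
by rewrite eF pre_size preS.
Qed.

Lemma last_hpre (h : seq V) (rho : nat -> V) n : last v0 (h ++ pre rho n) = rho n.
Proof. by rewrite last_cat (last_ne _ (rho 0)) ?pre_last //; rewrite /pre mkseqS; case: (mkseq _ _). Qed.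

Lemma hpreS (h : seq V) (rho : nat -> V) n :
  h ++ pre rho n.+1 = rcons (h ++ pre rho n) (rho n.+1).
Proof. by rewrite preS rcons_cat. Qed.

Lemma hpre0 (h : seq V) (rho : nat -> V) v : rho 0 = v -> h ++ pre rho 0 = rcons h v.
Proof. by move=> e; rewrite /pre /mkseq /= e cats1. Qed.

Lemma Follow h v : Inv (rcons h v) ->
  forall n, let rho := outcome owner (shift sg h) v in
  [/\ st (h ++ pre rho n) = st (rcons h v), Inv (h ++ pre rho n)
    & rho n.+1 = move (st (rcons h v)) (h ++ pre rho n)].
Proof.
move=> hI n rho.
have H : forall n, st (h ++ pre rho n) = st (rcons h v) /\ Inv (h ++ pre rho n).
  elim=> [|k [IH1 IH2]]; first by rewrite (hpre0 h (v:=v)). 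
  have ek : rho k.+1 = move (st (h ++ pre rho k)) (h ++ pre rho k).
    rewrite /rho out_step -/rho /shift /sg /=.
    by rewrite last_hpre -(last_hpre h rho k) (EdgeMove IH2).
  rewrite hpreS ek; have [I1 I2] := Inv_follow IH2.
  by split => //; rewrite I2 IH1.
have [H1 H2] := H n; split => //.
rewrite /rho out_step -/rho /shift /sg /=.
by rewrite last_hpre -(last_hpre h rho n) (EdgeMove H2) H1.
Qed.

Lemma suffix_pi (rho : nat -> V) n : mu (Defs.suffix rho n) = mu rho.
Proof.
rewrite -(Hpi (mkseq rho n)); congr mu; apply: funext => k.
rewrite /cat_play size_mkseq; case: ltnP => hk; first by rewrite nth_mkseq.
by rewrite /Defs.suffix subnKC.
Qed.

Lemma Plan h v : Inv (rcons h v) ->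
  lam_consistent owner mu lam (outcome owner (shift sg h) v).
Proof.
move=> hI; set rho := outcome owner (shift sg h) v.
have F := Follow hI.
case: (hI) => _; case Em: (st (rcons h v)) => [[u p]|].
  case=> hl hu hc.
  have hd := hist_ne hu; have hp := drop_ne hd.
  rewrite size_rcons ltnS in hp.
  have ed : drop p (rcons h v) = rcons (drop p h) v by rewrite drop_rcons.
  have erho : rho = outcome owner (shift (tau u) (drop p h)) v.
    apply: funext => n; symmetry; apply: out_char => // k.
    have [_ _ e] := F k; rewrite -/rho in e; rewrite e Em /= last_hpre.
    rewrite drop_cat; case: ifP => hph; first by [].
    have ep : p = size h by apply/eqP; rewrite eqn_leq hp leqNgt hph.
    by rewrite ep subnn drop0 drop_size.
  have [_ _ h3 _] := Hpun hl.
  by rewrite erho; apply: h3; rewrite -ed.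
rewrite size_rcons /= => eh.
have ex : forall n, rho n = xi (size h + n).
  elim=> [|n IH].
    rewrite addn0 /rho out0.
    by rewrite -(pre_last v xi) -eh last_rcons.
  have [_ _ e] := F n; rewrite -/rho in e; rewrite e Em /= size_cat pre_size.
  by rewrite addnS.
move=> n.
have -> : Defs.suffix rho n = Defs.suffix xi (size h + n).
  by apply: funext => k; rewrite /Defs.suffix ex addnA.
by rewrite ex; apply: Hxic.
Qed.

Lemma Inv_reset F w : Inv F -> E (last v0 F) w ->
  (lam (last v0 F) < +oo)%E ->
  st (rcons F w) = Some (last v0 F, (size F).-1) -> Inv (rcons F w).
Proof.
move=> [hh _] he hl est; split; first exact: hist_rcons.
rewrite est; have hne := hist_ne hh.
have -> : drop (size F).-1 (rcons F w) = [:: last v0 F; w].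
  case/lastP: F hne {hh he hl est} => [//|s x] _.
  by rewrite last_rcons size_rcons /= -cats1 -cats1 -catA drop_size_cat.
split => //; first by exists [:: w]; rewrite /= he.
by case=> [|n] //= _; rewrite eqxx.
Qed.

Lemma Inv_keep F w u p : Inv F -> E (last v0 F) w -> st F = Some (u, p) ->
  owner (last v0 F) = owner u -> st (rcons F w) = Some (u, p) -> Inv (rcons F w).
Proof.
move=> [hh hm] he Em ho est; split; first exact: hist_rcons.
rewrite est; move: hm; rewrite Em => -[hl hu hc].
have hd := hist_ne hu; have hp := drop_ne hd.
rewrite drop_rcons ?(ltnW hp) //; split => //.
  by apply: (hist_rcons hu); rewrite drop_last.
apply: (compat_rcons hc hd) => ho'.
by rewrite (last_ne u v0 hd) drop_last // ho eqxx in ho'.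
Qed.

Lemma Inv_step F w : Inv F -> E (last v0 F) w -> Inv (rcons F w).
Proof.
move=> hI he; have hne := hist_ne hI.1.
have hlast : (lam (last v0 F) < +oo)%E.
  case/lastP: F hI he hne => [//|h v] hI _ _.
  have := Plan hI 0; rewrite out0 last_rcons => hle.
  exact: (le_lt_trans hle (ltey _)).
have est := st_rcons w hne; rewrite /trans in est.
case: (eqVneq w (move (st F) F)) est => [ew _|hw].
  by rewrite ew; have [] := Inv_follow hI.
case Em: (st F) => [[u p]|] est.
  case: ifP est => [/andP [/eqP ho _] est|_ est]; last exact: Inv_reset.
  exact: (Inv_keep hI he Em).
exact: Inv_reset.
Qed.

Lemma Inv_all F : is_hist E v0 F -> Inv F.
Proof.
case=> t [-> ht].
elim/last_ind: t ht => [|t w IH].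
  by move=> _; split; [exists [::] | rewrite /= /pre /mkseq /= Hxi0].
rewrite rcons_path => /andP [ht he].
rewrite -rcons_cons; apply: Inv_step; first exact: IH.
by [].
Qed.

Hypothesis Heps : (0 <= eps)%R.

Lemma drop_pre (rho : nat -> V) p m : p <= m ->
  drop p (pre rho m) = pre (Defs.suffix rho p) (m - p).
Proof.
move=> hp; apply: (eq_from_nth (x0 := v0)).
  by rewrite size_drop !pre_size subSn.
move=> k; rewrite size_drop pre_size (subSn hp) ltnS => hk.
rewrite nth_drop !pre_nth //.
by rewrite -(subnKC hp) leq_add2l.
Qed.

Lemma take_pre (rho : nat -> V) k m : k <= m -> take k.+1 (pre rho m) = pre rho k.
Proof.
move=> hk; rewrite -(subnKC hk) /pre.
rewrite -addSn /mkseq iotaD map_cat take_size_cat //.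
by rewrite size_map size_iota.
Qed.

Definition mm (m : mode) : nat :=
  match m with Some (u, _) => #|[set y | (negov y < negov u)%E]| | None => 0 end.

Lemma SPE_main h v i s' : is_hist E v0 (rcons h v) -> valid_strat owner E i s' ->
  (mu (outcome owner (upd (shift sg h) i (fun h' => s' (h ++ h'))) v) i <=
   mu (outcome owner (shift sg h) v) i + eps)%R.
Proof.
move=> hH hs'.
set D := upd (shift sg h) i (fun h' => s' (h ++ h')).
set rD := outcome owner D v; set rN := outcome owner (shift sg h) v.
have hI := Inv_all hH.
have FN := Follow hI.
pose GD n := h ++ pre rD n.
have D1 : forall n, rD n.+1 =
    if owner (rD n) == i then s' (GD n) else sg (owner (rD n)) (GD n).
  by move=> n; rewrite /rD out_step /D /upd /shift; case: (_ == i).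
have GD0 : GD 0 = rcons h v by apply: hpre0.
have GDS : forall n, GD n.+1 = rcons (GD n) (rD n.+1) by move=> n; apply: hpreS.
have lastGD : forall n, last v0 (GD n) = rD n by move=> n; apply: last_hpre.
have InvGD : forall n, Inv (GD n).
  elim => [|n IH]; first by rewrite GD0.
  rewrite GDS; apply: (Inv_step IH); rewrite lastGD D1.
  case: eqP => ho.
    by have := valid_last (hist_ne IH.1) hs'; rewrite lastGD; apply.
  rewrite /sg lastGD; case: ifP => // _; exact: Hdef.
have neGD : forall n, GD n <> [::] by move=> n; exact: (hist_ne (InvGD n).1).
have D3 : forall n, owner (rD n) != i -> rD n.+1 = move (st (GD n)) (GD n).
  move=> n ho; rewrite D1 (negbTE ho) /sg.
  by have := EdgeMove (InvGD n); rewrite lastGD => ->.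
pose dev n := rD n.+1 != move (st (GD n)) (GD n).
have agree : forall n, (forall k, k < n -> ~~ dev k) ->
    pre rD n = pre rN n /\ st (GD n) = st (rcons h v).
  elim=> [|n IH] hk; first by rewrite GD0.
  have [e1 e2] := IH (fun k hk' => hk k (ltn_trans hk' (ltnSn n))).
  have nd := hk n (ltnSn n); rewrite /dev negbK in nd; move/eqP: nd => nd.
  have [_ _ eN] := FN n; rewrite -/rN in eN.
  have eS : rD n.+1 = rN n.+1 by rewrite nd e2 /GD e1 eN.
  split; first by rewrite !preS e1 eS.
  by rewrite GDS st_rcons // /trans nd eqxx.
have eqpre : forall n, pre rD n = pre rN n -> rD n = rN n.
  by move=> n e; rewrite -(pre_last v0 rD) e pre_last.
case: (pselect (exists n, dev n)) => [exD|noD]; last first.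
  have -> : rD = rN.
    apply: funext => n; apply: eqpre.
    have hk : forall k, k < n -> ~~ dev k.
      by move=> k _; apply/negP => dk; apply: noD; exists k.
    by have [] := agree n hk.
  by rewrite lerDl.
case: (ex_minnP exD) => n0 d0 min0.
have [e1 e2] : pre rD n0 = pre rN n0 /\ st (GD n0) = st (rcons h v).
  apply: agree => k hk; apply/negP => dk.
  by have := min0 k dk; rewrite leqNgt hk.
set x := rD n0.
have ex : x = rN n0 by apply: eqpre.
have ox : owner x = i.
  apply/eqP; apply: contraTT d0 => ho.
  by rewrite /dev negbK (D3 n0 ho).
have hlx : (lam x <= (mu rN i)%:E)%E.
  by have := Plan hI n0; rewrite -/rN suffix_pi -ex ox.
have hnx : (negov x <= lam x + eps%:E)%E := (Hfix x).2.
pose Q n := exists u p, [/\ st (GD n) = Some (u, p), owner u = i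
   & (negov u <= negov x)%E].
have stepL : forall n u p, st (GD n) = Some (u, p) -> owner u = i ->
    st (GD n.+1) = Some (u, p) \/
    exists p', [/\ st (GD n.+1) = Some (rD n, p'), owner (rD n) = i
                 & (negov (rD n) < negov u)%E].
  move=> n u p Em ou.
  rewrite GDS st_rcons // /trans Em lastGD.
  case: eqP => [_|hne]; first by left.
  have ho : owner (rD n) = i.
    apply/eqP; apply/negPn/negP => ho; apply: hne.
    by rewrite (D3 n ho) Em.
  rewrite ou ho eqxx /=; case: ifP => hlt; first by left.
  by right; exists (size (GD n)).-1; split => //; move/negbFE: hlt.
have Q1 : Q n0.+1.
  rewrite /Q GDS st_rcons // /trans; move: d0; rewrite /dev => d0.
  rewrite (negbTE d0) e2 lastGD -/x.
  case: (st (rcons h v)) => [[u p]|].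
    case: ifP => [/andP [/eqP ou hn]|_].
      by exists u, p; split => //; [rewrite ou | rewrite leNgt].
    by exists x, (size (GD n0)).-1.
  by exists x, (size (GD n0)).-1.
have QS : forall k, Q (n0.+1 + k).
  elim=> [|k [u [p [Em ou hu]]]]; first by rewrite addn0.
  rewrite addnS; case: (stepL _ _ _ Em ou) => [Em'|[p' [Em' ou' hlt]]].
    by exists u, p.
  exists (rD (n0.+1 + k)), p'; split => //.
  exact: le_trans (ltW hlt) hu.
have Qn : forall n, n0 < n -> Q n.
  by move=> n hn; rewrite -(subnKC hn); apply: QS.
have decr : forall n, n0 < n -> st (GD n.+1) != st (GD n) ->
    mm (st (GD n.+1)) < mm (st (GD n)).
  move=> n hn hne; have [u [p [Em ou _]]] := Qn n hn.
  case: (stepL _ _ _ Em ou) => [Em'|[p' [Em' _ hlt]]].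
    by rewrite Em' Em eqxx in hne.
  rewrite Em Em' /=; apply: proper_card; apply/properP; split.
    apply/fintype.subsetP => y; rewrite !inE => hy; exact: lt_trans hy hlt.
  by exists (rD n); rewrite !inE ?hlt // ltxx.
have EC : forall M n, n0 < n -> mm (st (GD n)) <= M ->
    exists N, n0 < N /\ forall j, st (GD (N + j)) = st (GD N).
  elim=> [|M IHM] n hn hm;
  (case: (pselect (exists j, st (GD (n + j)) != st (GD n))) => [exj|hno];
    last by exists n; split => // j; apply/eqP; apply/negPn/negP => hj;
      apply: hno; exists j);
  (case: (ex_minnP exj) => j1 hj1 minj; case: j1 hj1 minj => [|j2] hj1 minj;
    first by rewrite addn0 eqxx in hj1);
  (have hsame : st (GD (n + j2)) = st (GD n)
    by apply/eqP; apply/negPn/negP => hj; have := minj _ hj; rewrite ltnn);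
  (have hlt : mm (st (GD (n + j2.+1))) < mm (st (GD n))
    by rewrite -hsame addnS; apply: decr;
      [exact: leq_trans hn (leq_addr _ _) | by rewrite -addnS hsame]).
    by move: (leq_trans hlt hm).
  apply: (IHM (n + j2.+1) (leq_trans hn (leq_addr _ _))).
  by rewrite -ltnS (leq_trans hlt hm).
have [N [hN HN]] := EC _ n0.+1 (ltnSn n0) (leqnn _).
have [u [p [Em ou hu]]] := Qn N hN.
have stN : forall j, st (GD (N + j)) = Some (u, p) by move=> j; rewrite HN Em.
have InvN : forall j, [/\ (lam u < +oo)%E, is_hist E u (drop p (GD (N + j)))
    & compat_minus owner (owner u) (pun u).1 u (drop p (GD (N + j)))].
  by move=> j; have [_] := InvGD (N + j); rewrite stN.
have [hl hu0 _] := InvN 0.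
have szG : forall n, size (GD n) = size h + n.+1.
  by move=> n; rewrite size_cat pre_size.
have hpN : p <= size h + N.
  by have := drop_ne (hist_ne hu0); rewrite szG addn0 addnS ltnS.
pose Phi := cat_play h rD.
pose psi := Defs.suffix Phi p.
have preCat : forall n, pre Phi (size h + n) = GD n.
  move=> n; apply: (eq_from_nth (x0 := v0)); first by rewrite szG pre_size addnS.
  move=> k; rewrite pre_size ltnS => hk.
  rewrite pre_nth // /Phi /cat_play nth_cat; case: ifP => hk2.
    exact: set_nth_default.
  by rewrite pre_nth // leq_subLR.
have dropG : forall j, drop p (GD (N + j)) = pre psi (size h + (N + j) - p).
  move=> j; rewrite -preCat drop_pre //.
  by rewrite (leq_trans hpN) // leq_add2l leq_addr.
have hkM : forall k j, k < j -> k < size h + (N + j) - p.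
  move=> k j hkj; rewrite addnA -addnBAC //.
  exact: leq_trans hkj (leq_addl _ _).
have psi0 : psi 0 = u.
  move: hu0; rewrite dropG; case=> t [et _].
  have := pre_nth v0 psi (leq0n (size h + (N + 0) - p)).
  rewrite et /= => <-; by [].
have psiE : forall k, E (psi k) (psi k.+1).
  move=> k; have [_ hu1 _] := InvN k.+1; move: hu1; rewrite dropG.
  case=> t [et pt].
  have hk := hkM k k.+1 (ltnSn k).
  have st' : size t = size h + (N + k.+1) - p.
    by have := congr1 size et; rewrite pre_size /= => -[].
  have a1 : nth v0 (u :: t) k = psi k by rewrite -et pre_nth // ltnW.
  have a2 : nth v0 t k = psi k.+1.
    by rewrite -[nth v0 t k]/(nth v0 (u :: t) k.+1) -et pre_nth.
  by move/(pathP v0): pt => /(_ k); rewrite st' a1 a2; apply.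
have psiC : forall k, owner (psi k) != i ->
    psi k.+1 = (pun u).1 (owner (psi k)) (pre psi k).
  move=> k ho; have [_ _ hc] := InvN k.+1; rewrite dropG in hc.
  have hk := hkM k k.+1 (ltnSn k).
  move: hc; set M := size h + (N + k.+1) - p => hc.
  have h1 : k.+1 < size (pre psi M) by rewrite pre_size ltnS.
  have h2 : owner (nth u (pre psi M) k) != owner u.
    by rewrite (pre_nth u psi (ltnW hk)) ou.
  have := hc k h1 h2.
  by rewrite (pre_nth u psi hk) (pre_nth u psi (ltnW hk)) (take_pre _ (ltnW hk)).
pose tS : strategy V := fun G =>
  if G == pre psi (size G).-1 then psi (size G) else def (last v0 G).
have tSv : valid_strat owner E i tS.
  move=> g y hy; rewrite /tS size_rcons /=; case: eqP => [eg|_].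
    have ey : y = psi (size g).
      by have := congr1 (last v0) eg; rewrite last_rcons pre_last.
    by rewrite ey.
  by rewrite last_rcons.
have eo : outcome owner (upd (pun u).1 i tS) u = psi.
  apply: funext; apply: out_char => // k; rewrite /upd; case: eqP => ho.
    by rewrite /tS pre_size /= eqxx.
  by apply: psiC; apply/eqP.
have hb : ((mu psi i)%:E <= negov u)%E.
  have [_ _ _ <-] := Hpun hl; rewrite ou.
  by apply: ereal_sup_ubound; exists tS => //; rewrite eo.
have emu : mu psi = mu rD by rewrite /psi suffix_pi /Phi Hpi.
rewrite -lee_fin EFinD -emu.
apply: (le_trans hb); apply: (le_trans hu); apply: (le_trans hnx).
exact: leeD2r.
Qed.

Lemma sec_main : exists sg0 : profile Pi V,
    valid_profile owner E sg0 /\ eps_SPE owner E mu eps v0 sg0 /\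
    (forall n, outcome owner sg0 v0 n = xi n).
Proof.
exists sg; split; [|split].
- move=> j g y hy; rewrite /sg last_rcons; case: ifP => // _; exact: Hdef.
- move=> h v hH i s' hs'; rewrite !Hpi; exact: SPE_main.
have hI : Inv (rcons [::] v0) by apply: Inv_all; exists [::].
have F := Follow hI.
have -> : outcome owner sg v0 = outcome owner (shift sg [::]) v0 by [].
elim=> [|n IH]; first by rewrite out0.
have [_ _ e] := F n; rewrite e /=.
by rewrite size_map size_iota.
Qed.

End Main.

Local Open Scope ring_scope.

Theorem mainTheorem5 (R : realType) (Pi V : finType) (owner : V -> Pi)
  (E : rel V) (mu : (nat -> V) -> Pi -> R) (v0 : V)
  (HE : forall v, exists w, E v w)
  (Hwi : well_initialized E v0)
  (Hpi : prefix_independent mu)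
  (Hsteady : steady_negotiation owner E mu)
  (eps : R) (Heps : 0 <= eps)
  (lam : requirement R V)
  (Hfix : eps_fixed_point owner E mu eps lam) :
  forall xi : nat -> V, xi 0%N = v0 -> is_play E xi -> lam_consistent owner mu lam xi ->
  exists sg : profile Pi V,
    valid_profile owner E sg /\ eps_SPE owner E mu eps v0 sg /\
    (forall n, outcome owner sg v0 n = xi n).
Proof.
move=> xi Hxi0 Hxip Hxic.
have [def Hdef] : exists def : V -> V, forall v, E v (def v).
  by have [f Hf] := choice HE; exists f.
have H : forall u, exists pr : profile Pi V * strategy V,
    (lam u < +oo)%E -> PunSpec owner E mu lam (fun _ => pr) u.
  move=> u; case: (pselect (lam u < +oo)%E) => hl; last first.
    by exists ((fun _ _ => v0), (fun _ => v0)).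
  have hn : (nego owner E mu lam u < +oo)%E.
    exact: le_lt_trans (Hfix u).2 (lte_add_pinfty hl (ltry _)).
  case: (Hsteady (owner u) u lam) => [S0|[x [sg0 hsg0 ex] hmin]].
    by move: hn; rewrite /nego S0 ereal_inf0 ltxx.
  case: (hsg0) => hv [si [hsi hc]].
  exists (sg0, si) => _; split => //=.
  rewrite /negov ex; apply/eqP; rewrite eq_le; apply/andP; split.
    by apply/ereal_infP.
  by rewrite /nego; apply: ereal_inf_lbound; exists sg0.
have [f Hf] := choice H.
have Hpun : forall u, (lam u < +oo)%E -> PunSpec owner E mu lam f u.
  by move=> u /Hf.
exact: (sec_main Hpi Hfix Hxi0 Hxip Hxic Hdef Hpun Heps).
Qed.
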